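(* Let $(\Omega,\Sigma,\mu)$ be a finite measure space and let $X(\mu)$ and $Y(\mu)$ be Banach rectangular function spaces with the subsequence property. (i) If $T:X(\mu)\to Y(\mu)$ is a positive linear operator ($Tf\ge0$ whenever $f\ge 0$), then $T$ is continuous. (ii) If $X(\mu)$, with norm $\|\cdot\|$, is also a Banach rectangular function space with the subsequence property under another norm $\|\cdot\|_0$, then $\|\cdot\|$ and $\|\cdot\|_0$ are equivalent norms.
   Context: $L^0(\mu)$ is the space of equivalence classes (modulo $\mu$-a.e. equality) of real $\Sigma$-measurable functions, ordered $\mu$-a.e. A Banach rectangular function space is a vector subspace $X(\mu)\subseteq L^0(\mu)$ with a complete norm such that for some $C>0$, $\chi_Af\in X(\mu)$ and $\|\chi_Af\|\le C\|f\|$ for all $f\in X(\mu)$, $A\in\Sigma$. Subsequence property: whenever $f_n,f\in X(\mu)$ and $f_n\to f$ in norm, some subsequence converges to $f$ $\mu$-a.e. *)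

(* Defs.v *)
From HB Require Import structures.
From mathcomp Require Import all_boot all_order all_algebra.
From mathcomp Require Import all_classical all_reals all_analysis.
Set Implicit Arguments. Unset Strict Implicit. Unset Printing Implicit Defensive.
Import Order.TTheory GRing.Theory Num.Theory.
Import numFieldNormedType.Exports.
Local Open Scope classical_set_scope.
Local Open Scope ring_scope.

(* Elements of L^0(mu) are represented by measurable functions T -> R; a
   "function space" X(mu) is represented by the set X of all representatives
   of its classes (closed under a.e. equality), and its norm by a map
   N : (T -> R) -> R that is constant on a.e.-classes.  The norm vanishing
   exactly on the class of 0 makes N a genuine norm on the quotient. *)
Section Defs.
Context {d : measure_display} {T : measurableType d} {R : realType}.
Variable mu : {measure set T -> \bar R}.

Definition banach_rect_space (X : set (T -> R)) (N : (T -> R) -> R) : Prop :=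
  [/\
      (forall f, X f -> measurable_fun setT f) /\
      (forall f g, X f -> measurable_fun setT g ->
          {ae mu, forall x, f x = g x} -> X g /\ N g = N f),
      [/\ X (fun _ => 0),
          (forall f g, X f -> X g -> X (fun x => f x + g x)) &
          (forall (a : R) f, X f -> X (fun x => a * f x))],
      [/\ (forall f, X f -> 0 <= N f),
          (forall f, X f -> (N f = 0 <-> {ae mu, forall x, f x = 0})),
          (forall f g, X f -> X g -> N (fun x => f x + g x) <= N f + N g) &
          (forall (a : R) f, X f -> N (fun x => a * f x) = `|a| * N f)],
      (forall u : nat -> T -> R, (forall n, X (u n)) ->
          (forall e : R, 0 < e -> exists M, forall m n, (M <= m)%N -> (M <= n)%N ->
              N (fun x => u n x - u m x) < e) ->
          exists2 f, X f & (fun n => N (fun x => u n x - f x)) @ \oo --> (0 : R)) &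
      exists2 C : R, 0 < C & forall f A, X f -> measurable A ->
          X (fun x => \1_A x * f x) /\ N (fun x => \1_A x * f x) <= C * N f].

Definition subsequence_property (X : set (T -> R)) (N : (T -> R) -> R) : Prop :=
  forall (u : nat -> T -> R) f, (forall n, X (u n)) -> X f ->
    (fun n => N (fun x => u n x - f x)) @ \oo --> (0 : R) ->
    exists phi : nat -> nat, {homo phi : m n / (m < n)%N} /\
      {ae mu, forall x, (fun n => u (phi n) x) @ \oo --> f x}.

Definition positive_linear_op (X Y : set (T -> R)) (Top : (T -> R) -> (T -> R))
  : Prop :=
  [/\ (forall f, X f -> Y (Top f)),
      (forall f g, X f -> X g -> {ae mu, forall x, f x = g x} ->
          {ae mu, forall x, Top f x = Top g x}),
      (forall f g (a : R), X f -> X g ->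
          {ae mu, forall x, Top (fun y => f y + a * g y) x = Top f x + a * Top g x}) &
      (forall f, X f -> {ae mu, forall x, 0 <= f x} ->
          {ae mu, forall x, 0 <= Top f x})].

Definition op_continuous (X : set (T -> R)) (NX NY : (T -> R) -> R)
  (Top : (T -> R) -> (T -> R)) : Prop :=
  forall f, X f -> forall e : R, 0 < e -> exists2 del : R, 0 < del &
    forall g, X g -> NX (fun x => g x - f x) < del ->
      NY (fun x => Top g x - Top f x) < e.

Definition equivalent_norms (X : set (T -> R)) (N1 N2 : (T -> R) -> R) : Prop :=
  exists c C : R, [/\ 0 < c, 0 < C &
    forall f, X f -> c * N1 f <= N2 f /\ N2 f <= C * N1 f].
End Defs.

(* Main.v *)
Require Import Defs.
From HB Require Import structures.
From mathcomp Require Import all_boot all_order all_algebra.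
From mathcomp Require Import all_classical all_reals all_analysis.
From mathcomp Require Import ring lra.
Import Order.TTheory GRing.Theory Num.Theory.
Import numFieldNormedType.Exports.
Local Open Scope classical_set_scope.
Local Open Scope ring_scope.

Section Space.
Set Implicit Arguments. Unset Strict Implicit.
Context {d : measure_display} {T : measurableType d} {R : realType}.
Variable mu : {measure set T -> \bar R}.
Variables (Z : set (T -> R)) (NZ : (T -> R) -> R).
Hypothesis HZ : banach_rect_space mu Z NZ.

Lemma Zmeas f : Z f -> measurable_fun setT f.
Proof. by case: HZ => -[H _] _ _ _ _; exact: H. Qed.

Lemma Zae f g : Z f -> measurable_fun setT g ->
  {ae mu, forall x, f x = g x} -> Z g /\ NZ g = NZ f.
Proof. by case: HZ => -[_ H] _ _ _ _; exact: H. Qed.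

Lemma Z0 : Z (fun _ => 0).
Proof. by case: HZ => _ [] . Qed.

Lemma ZD f g : Z f -> Z g -> Z (fun x => f x + g x).
Proof. by case: HZ => _ [] _ H _ _ _ _; exact: H. Qed.

Lemma ZZ (a : R) f : Z f -> Z (fun x => a * f x).
Proof. by case: HZ => _ [] _ _ H _ _ _; exact: H. Qed.

Lemma ZDZ f g (a : R) : Z f -> Z g -> Z (fun x => f x + a * g x).
Proof. by move=> Zf Zg; apply: ZD => //; exact: ZZ. Qed.

Lemma ZN f : Z f -> Z (fun x => - f x).
Proof.
move=> Zf; have := ZZ (-1) Zf.
by have -> : (fun x => -1 * f x) = (fun x => - f x) by apply: funext => x; rewrite mulN1r.
Qed.

Lemma ZB f g : Z f -> Z g -> Z (fun x => f x - g x).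
Proof. by move=> Zf Zg; apply: ZD => //; exact: ZN. Qed.

Lemma NZ_ge0 f : Z f -> 0 <= NZ f.
Proof. by case: HZ => _ _ [H _ _ _] _ _; exact: H. Qed.

Lemma NZ_eq0 f : Z f -> (NZ f = 0 <-> {ae mu, forall x, f x = 0}).
Proof. by case: HZ => _ _ [_ H _ _] _ _; exact: H. Qed.

Lemma NZD f g : Z f -> Z g -> NZ (fun x => f x + g x) <= NZ f + NZ g.
Proof. by case: HZ => _ _ [_ _ H _] _ _; exact: H. Qed.

Lemma NZZ (a : R) f : Z f -> NZ (fun x => a * f x) = `|a| * NZ f.
Proof. by case: HZ => _ _ [_ _ _ H] _ _; exact: H. Qed.

Lemma NZ0 : NZ (fun _ => 0) = 0.
Proof. by apply/(NZ_eq0 Z0); exact: aeW. Qed.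

Lemma NZN f : Z f -> NZ (fun x => - f x) = NZ f.
Proof.
move=> Zf; have := NZZ (-1) Zf; rewrite normrN normr1 mul1r.
by have -> : (fun x => -1 * f x) = (fun x => - f x) by apply: funext => x; rewrite mulN1r.
Qed.

Lemma NZB_sym f g : Z f -> Z g ->
  NZ (fun x => f x - g x) = NZ (fun x => g x - f x).
Proof.
move=> Zf Zg; rewrite -(NZN (ZB Zg Zf)).
by congr NZ; apply: funext => x; rewrite opprB.
Qed.

Lemma NZ_tri f g h : Z f -> Z g -> Z h ->
  NZ (fun x => f x - h x) <= NZ (fun x => f x - g x) + NZ (fun x => g x - h x).
Proof.
move=> Zf Zg Zh; have := NZD (ZB Zf Zg) (ZB Zg Zh).
have -> // : (fun x => f x - g x + (g x - h x)) = (fun x => f x - h x).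
by apply: funext => x; rewrite addrA subrK.
Qed.

Lemma NZ_aeeq f g : Z f -> Z g -> {ae mu, forall x, f x = g x} -> NZ f = NZ g.
Proof. by move=> Zf Zg H; have [_ ->] := Zae Zf (Zmeas Zg) H. Qed.

Lemma NZ_le_sub f g : Z f -> Z g -> NZ g <= NZ f + NZ (fun x => f x - g x).
Proof.
move=> Zf Zg; have := NZ_tri Zg Zf Z0.
have -> : (fun x => g x - 0) = g by apply: funext => x; rewrite subr0.
have -> : (fun x => f x - 0) = f by apply: funext => x; rewrite subr0.
by rewrite NZB_sym // addrC.
Qed.

Lemma Zrect : exists2 C : R, 0 < C & forall f A, Z f -> measurable A ->
  Z (fun x => \1_A x * f x) /\ NZ (fun x => \1_A x * f x) <= C * NZ f.
Proof. by case: HZ. Qed.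

Lemma Zcomplete (u : nat -> T -> R) : (forall n, Z (u n)) ->
  (forall e : R, 0 < e -> exists M, forall m n, (M <= m)%N -> (M <= n)%N ->
      NZ (fun x => u n x - u m x) < e) ->
  exists2 f, Z f & (fun n => NZ (fun x => u n x - f x)) @ \oo --> (0 : R).
Proof. by case: HZ => _ _ _ H _; exact: H. Qed.


Lemma exists_geo_small (c e : R) : 0 < e -> exists M : nat, c / 2 ^+ M < e.
Proof.
move=> e0.
have [c0|c0] := leP c 0.
  by exists 0%N; rewrite expr0 divr1; apply: le_lt_trans c0 e0.
have h : 0 <= c / e by apply: divr_ge0; [exact: ltW|exact: ltW].
exists (Num.Def.archi_bound (c / e)).
set M := Num.Def.archi_bound (c / e).
have h1 := archi_boundP h.
have h2 : (M%:R : R) <= 2 ^+ M.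
  have := ltn_expl M (isT : (1 < 2)%N) => /ltnW.
  by rewrite -(ler_nat R) natrX.
have h3 : c / e < 2 ^+ M by apply: lt_le_trans h2.
have p2 : 0 < (2 : R) ^+ M by apply: exprn_gt0.
rewrite ltr_pdivrMr // mulrC -ltr_pdivrMr //.
Qed.

Lemma Zcauchy (v : nat -> T -> R) (b : nat -> R) :
  (forall k, Z (v k)) -> (forall k, 0 <= b k) -> (forall k, b k.+1 <= b k / 2) ->
  (forall k, NZ (fun x => v k.+1 x - v k x) <= b k) ->
  exists2 w, Z w & ((fun n => NZ (fun x => v n x - w x)) @ \oo --> (0:R)) /\
    forall k, NZ (fun x => v k x - w x) <= 2 * b k.
Proof.
move=> Zv b0 bh vb.
have bgeo k : b k <= b 0%N / 2 ^+ k.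
  elim: k => [|k IH]; first by rewrite expr0 divr1.
  apply: (le_trans (bh k)); rewrite exprS [2 * _]mulrC invfM mulrA.
  by rewrite ler_pM2r ?invr_gt0.
have Nvv k : NZ (fun x => v k x - v k x) = 0.
  by rewrite -NZ0; congr NZ; apply: funext => x; rewrite subrr.
have inv k m : NZ (fun x => v (k + m)%N x - v k x) + 2 * b (k + m)%N <= 2 * b k.
  elim: m => [|m IH]; first by rewrite addn0 Nvv add0r.
  rewrite addnS.
  have := NZ_tri (Zv (k + m).+1) (Zv (k + m)%N) (Zv k).
  have := vb (k + m)%N; have := bh (k + m)%N; lra.
have diff k n : (k <= n)%N -> NZ (fun x => v n x - v k x) <= 2 * b k.
  move=> kn; have := inv k (n - k)%N; rewrite subnKC //.
  have := b0 n; lra.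
have [w Zw cw] : exists2 w, Z w & (fun n => NZ (fun x => v n x - w x)) @ \oo --> (0:R).
  apply: Zcomplete => // e e0.
  have [M HM] := exists_geo_small (4 * b 0%N) (e0).
  exists M => m n Mm Mn.
  apply: (le_lt_trans (NZ_tri (Zv n) (Zv M) (Zv m))).
  rewrite (NZB_sym (Zv M) (Zv m)).
  have := diff _ _ Mm; have := diff _ _ Mn; have := bgeo M.
  move: HM; rewrite -mulrA.
  have p2 : 0 < (2 : R) ^+ M by apply: exprn_gt0.
  set q := b 0%N / 2 ^+ M. lra.
exists w => //; split => // k.
apply/ler_addgt0Pr => eps eps0.
have [N0 _ HN] := cvgr0_norm_lt _ cw _ eps0.
have kn : (k <= maxn k N0)%N by rewrite leq_maxl.
have := HN (maxn k N0) (leq_maxr k N0) => /=.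
move=> /(le_lt_trans (ler_norm _)) h.
apply: (le_trans (NZ_tri (Zv k) (Zv (maxn k N0)) Zw)).
rewrite (NZB_sym (Zv k)) //.
have := diff _ _ kn; lra.
Qed.


Lemma NZB_le f g : Z f -> Z g -> NZ (fun x => f x - g x) <= NZ f + NZ g.
Proof. by move=> Zf Zg; rewrite -(NZN Zg); exact: NZD (ZN Zg). Qed.

Lemma Zabs_ex : exists2 C : R, 0 < C & forall f, Z f ->
  Z (fun x => `|f x|) /\ NZ (fun x => `|f x|) <= C * NZ f.
Proof.
have [C C0 HC] := Zrect.
exists (C + C); first by rewrite addr_gt0.
move=> f Zf.
have mA : measurable [set x | 0 <= f x].
  by have := measurable_fun_le measurableT (measurable_cst (0:R)) (Zmeas Zf); rewrite setTI.
have mAc : measurable (~` [set x | 0 <= f x]) by exact: measurableC.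
have [Z1 N1] := HC f _ Zf mA.
have [Z2 N2] := HC f _ Zf mAc.
have -> : (fun x => `|f x|) = (fun x => \1_[set x | 0 <= f x] x * f x -
    \1_(~` [set x | 0 <= f x]) x * f x).
  apply: funext => x; rewrite !indicE.
  have [h|h] := leP 0 (f x).
    rewrite mem_set //= memNset /=; last by move/(_ h).
    by rewrite mul1r mul0r subr0 ger0_norm.
  rewrite memNset /=; last by rewrite leNgt h.
  rewrite mem_set /=; last by rewrite leNgt h.
  by rewrite mul0r mul1r sub0r ltr0_norm.
split; first exact: ZB.
apply: (le_trans (NZB_le Z1 Z2)); lra.
Qed.

End Space.

Section Op.
Set Implicit Arguments. Unset Strict Implicit.
Context {d : measure_display} {T : measurableType d} {R : realType}.
Variable mu : {measure set T -> \bar R}.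
Variables (X : set (T -> R)) (N : (T -> R) -> R).
Variables (Y : set (T -> R)) (NY : (T -> R) -> R).
Variable (Top : (T -> R) -> (T -> R)).
Hypothesis HX : banach_rect_space mu X N.
Hypothesis HY : banach_rect_space mu Y NY.
Hypothesis HT : positive_linear_op mu X Y Top.

Lemma TY f : X f -> Y (Top f).
Proof. by case: HT => H _ _ _; exact: H. Qed.

Lemma Tae f g : X f -> X g -> {ae mu, forall x, f x = g x} ->
  {ae mu, forall x, Top f x = Top g x}.
Proof. by case: HT => _ H _ _; exact: H. Qed.

Lemma Tlin f g (a : R) : X f -> X g ->
  {ae mu, forall x, Top (fun y => f y + a * g y) x = Top f x + a * Top g x}.
Proof. by case: HT => _ _ H _; exact: H. Qed.

Lemma Tpos f : X f -> {ae mu, forall x, 0 <= f x} -> {ae mu, forall x, 0 <= Top f x}.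
Proof. by case: HT => _ _ _ H; exact: H. Qed.

Lemma T0 : {ae mu, forall x, Top (fun _ => 0) x = 0}.
Proof.
have X0 := Z0 HX.
have := Tlin 1 X0 X0.
have -> : (fun y : T => (0:R) + 1 * 0) = (fun _ => 0) by apply: funext => y; rewrite mulr0 addr0.
by apply: filterS => x; rewrite mul1r => h; lra.
Qed.

Lemma TZ g (a : R) : X g -> {ae mu, forall x, Top (fun y => a * g y) x = a * Top g x}.
Proof.
move=> Xg; have := Tlin a (Z0 HX) Xg.
have -> : (fun y => 0 + a * g y) = (fun y => a * g y) by apply: funext => y; rewrite add0r.
by apply: filterS2 T0 => x -> ->; rewrite add0r.
Qed.

Lemma TB f g : X f -> X g ->
  {ae mu, forall x, Top (fun y => f y - g y) x = Top f x - Top g x}.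
Proof.
move=> Xf Xg; have := Tlin (-1) Xf Xg.
have -> : (fun y => f y + -1 * g y) = (fun y => f y - g y) by apply: funext => y; rewrite mulN1r.
by apply: filterS => x ->; rewrite mulN1r.
Qed.

Lemma NY_TB f g : X f -> X g ->
  NY (fun x => Top f x - Top g x) = NY (Top (fun y => f y - g y)).
Proof.
move=> Xf Xg; apply: (NZ_aeeq HY).
- apply: (ZB HY); exact: TY.
- exact: TY (ZB HX Xf Xg).
by apply: filterS (TB Xf Xg) => x ->.
Qed.

Lemma NY_TZ g (a : R) : X g -> NY (Top (fun y => a * g y)) = `|a| * NY (Top g).
Proof.
move=> Xg; rewrite -(NZZ HY a (TY Xg)); apply: (NZ_aeeq HY).
- exact: TY (ZZ HX a Xg).
- apply: (ZZ HY); exact: TY.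
exact: TZ.
Qed.


Hypothesis HXs : subsequence_property mu X N.
Hypothesis HYs : subsequence_property mu Y NY.

Lemma aeI (P Q : T -> Prop) : {ae mu, forall x, P x} -> {ae mu, forall x, Q x} ->
  {ae mu, forall x, P x /\ Q x}.
Proof. by apply: filterS2 => x. Qed.

Lemma homo_ge (phi : nat -> nat) : {homo phi : m n / (m < n)%N} ->
  forall n, (n <= phi n)%N.
Proof.
move=> hphi; elim=> [|n IH] //.
by apply: leq_ltn_trans IH (hphi n n.+1 _).
Qed.

Lemma closed_T (u : nat -> T -> R) h w (c : R) :
  (forall k, X (u k)) -> X h -> Y w -> 0 <= c ->
  (forall k, N (fun x => u k x - h x) <= c / 4 ^+ k) ->
  (fun n => NY (fun x => Top (u n) x - w x)) @ \oo --> (0:R) ->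
  {ae mu, forall x, Top h x = w x}.
Proof.
move=> Xu Xh Yw c0 Nu cvw.
have [C C0 HC] := Zabs_ex HX.
pose dd k := fun x : T => (u k x - h x : R).
have Xd k : X (dd k) by apply: (ZB HX)...
pose a k := fun x : T => (2:R) ^+ k * `|dd k x|.
have Xa k : X (a k) by apply: (ZZ HX); exact: (HC _ (Xd k)).1.
pose b k := C * c / 2 ^+ k.
have p2 k : 0 < (2:R) ^+ k by apply: exprn_gt0.
have Na k : N (a k) <= b k.
  rewrite /a (NZZ HX _ (HC _ (Xd k)).1) ger0_norm; last exact: ltW.
  have := (HC _ (Xd k)).2; have := Nu k.
  have e4 : (4:R) ^+ k = 2 ^+ k * 2 ^+ k by rewrite -exprMn; congr (_ ^+ _); lra.
  rewrite e4 /b => h1 h2.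
  have h3 : C * N (dd k) <= C * (c / (2 ^+ k * 2 ^+ k)) by rewrite ler_pM2l.
  have := ler_pM2l (p2 k) => h4.
  apply: (le_trans (ler_wpM2l (ltW (p2 k)) (le_trans h2 h3))).
  rewrite invfM !mulrA mulrC !mulrA mulVf ?gt_eqF // mul1r; lra.
pose P := fix P k := match k with 0%N => fun _ : T => (0:R) | k'.+1 => fun x => P k' x + a k' x end.
have PS k : P k.+1 = (fun x => P k x + a k x) by [].
have XP k : X (P k).
  elim: k => [|k IH]; first exact: Z0 HX.
  by rewrite PS; apply: (ZD HX).
have a0 k x : 0 <= a k x by apply: mulr_ge0; [exact: ltW|exact: normr_ge0].
have P0 k x : 0 <= P k x.
  by elim: k => [|k IH] //; rewrite PS; apply: addr_ge0.
have Pa k m x : a k x <= P (k + m).+1 x.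
  elim: m => [|m IH]; first by rewrite addn0 PS; have := P0 k x; lra.
  by rewrite addnS PS; have := a0 (k + m).+1 x; lra.
have [G XG [cvG _]] : exists2 G, X G & ((fun n => N (fun x => P n x - G x)) @ \oo --> (0:R)) /\
    forall k, N (fun x => P k x - G x) <= 2 * b k.
  apply: (Zcauchy HX) => // k.
  - by apply: mulr_ge0; [apply: mulr_ge0; [exact: ltW|]|rewrite invr_ge0; exact: ltW].
  - by rewrite /b exprS invfM !mulrA mulrAC.
  - have -> : (fun x => P k.+1 x - P k x) = a k.
      by apply: funext => x; rewrite PS /=; lra.
    exact: Na.
have [phi [phiinc aeG]] := HXs XP XG cvG.
have aeGa : {ae mu, forall x, forall k, a k x <= G x}.
  apply: filterS aeG => x cx k.
  have hc : \forall n \near \oo, [set y | a k x <= y] (P (phi n) x).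
    exists k.+1 => // n /= kn.
  have := Pa k (phi n - k.+1)%N x; rewrite -addSn subnKC //.
  exact: leq_trans kn (homo_ge phiinc n).
  exact: (@closed_cvg _ _ \oo _ (fun n => P (phi n) x) [set y | a k x <= y] (@closed_ge _ (a k x)) hc (G x) cx).
have aebound : {ae mu, forall x, forall k,
    `|Top (u k) x - Top h x| * 2 ^+ k <= Top G x}.
  apply: ae_foralln => k.
  have Xp : X (fun y => G y + 2 ^+ k * dd k y) by apply: (ZDZ HX).
  have Xm : X (fun y => G y + (- 2 ^+ k) * dd k y) by apply: (ZDZ HX).
  have pp : {ae mu, forall x, 0 <= Top (fun y => G y + 2 ^+ k * dd k y) x}.
    apply: Tpos => //; apply: filterS aeGa => x /(_ k).
    rewrite /a => h1; have := ler_norm (- dd k x); rewrite normrN => h2.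
    have h3 : 0 <= 2 ^+ k * (`|dd k x| + dd k x) by apply: mulr_ge0; [exact: ltW|lra].
    rewrite mulrDr in h3; lra.
  have pm : {ae mu, forall x, 0 <= Top (fun y => G y + (- 2 ^+ k) * dd k y) x}.
    apply: Tpos => //; apply: filterS aeGa => x /(_ k).
    rewrite /a => h1; have := ler_norm (dd k x) => h2.
    have h3 : 0 <= 2 ^+ k * (`|dd k x| - dd k x) by apply: mulr_ge0; [exact: ltW|lra].
    rewrite mulrBr in h3; rewrite mulNr; lra.
  have := aeI (aeI pp pm) (aeI (aeI (Tlin (2 ^+ k) XG (Xd k)) (Tlin (- 2 ^+ k) XG (Xd k)))
     (TB (Xu k) Xh)).
  apply: filterS => x [[h1 h2] [[e1 e2] e3]].
  move: h1 h2; rewrite e1 e2 /dd e3.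
  set q := Top (u k) x - Top h x.
  have pk := p2 k.
  have [q0|q0] := leP 0 q.
    by rewrite ger0_norm // mulrC; lra.
  by rewrite ltr0_norm // mulrC; lra.
have [psi [psiinc aew]] := HYs (fun k => TY (Xu k)) Yw cvw.
apply: filterS2 aebound aew => x hb cw.
apply/eqP; rewrite -subr_eq0 -normr_le0; apply/ler_addgt0Pr => eps eps0.
rewrite add0r.
have e2 : 0 < eps / 2 by lra.
have [M1 _ HM1] := cvgr_dist_lt _ _ cw _ e2.
have [M2 HM2] := exists_geo_small (Top G x) e2.
pose n := maxn M1 M2.
have := HM1 n (leq_maxl _ _) => /= h1.
have hn : (M2 <= psi n)%N by apply: leq_trans (leq_maxr M1 M2) (homo_ge psiinc n).
have h2 : (2:R) ^+ M2 <= 2 ^+ psi n by apply: ler_weXn2l => //; lra.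
have := hb (psi n) => h3.
have h4 : `|Top (u (psi n)) x - Top h x| * 2 ^+ M2 <= Top G x.
  apply: le_trans h3; apply: ler_wpM2l => //; exact: normr_ge0.
have h5 : `|Top (u (psi n)) x - Top h x| <= Top G x / 2 ^+ M2.
  by rewrite ler_pdivlMr.
have := ler_normD (w x - Top (u (psi n)) x) (Top (u (psi n)) x - Top h x).
rewrite addrA subrK (distrC (Top h x)); lra.
Qed.


Lemma baire_step : exists n : nat, exists x0, exists r : R,
  [/\ X x0, 0 < r & forall h, X h -> N (fun x => h x - x0 x) < r ->
    forall eps, 0 < eps -> exists g,
      [/\ X g, N (fun x => g x - h x) < eps & NY (Top g) <= n%:R]].
Proof.
apply: contrapT => nC.
have step : forall t : (nat * (T -> R)) * R, exists p : (T -> R) * R,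
   X t.1.2 -> 0 < t.2 -> [/\ X p.1, N (fun x => p.1 x - t.1.2 x) < t.2, 0 < p.2 &
      forall g, X g -> N (fun x => g x - p.1 x) < p.2 -> t.1.1%:R < NY (Top g)].
  move=> [[n x0] r] /=.
  have [[Xx0 r0]|nh] := pselect (X x0 /\ 0 < r); last first.
    by exists (x0, r) => Xx0 r0; exfalso; apply: nh.
  have : ~ (forall h, X h -> N (fun x => h x - x0 x) < r ->
    forall eps, 0 < eps -> exists g,
      [/\ X g, N (fun x => g x - h x) < eps & NY (Top g) <= n%:R]).
    by move=> H; apply: nC; exists n, x0, r; split.
  move/existsNP => [h /not_implyP [Xh /not_implyP [hr /existsNP [eps /not_implyP [eps0 nex]]]]].
  exists (h, eps) => _ _; split => // g Xg gh.
  rewrite ltNge; apply/negP => le; apply: nex; exists g; split => //.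
have [F HF] := choice step.
pose s := fix s k := match k with
  | 0%N => ((fun _ : T => (0:R)), (1:R))
  | k'.+1 => let p := F ((k', (s k').1), (s k').2 / 2) in (p.1, Num.min p.2 (s k').2 / 2)
  end.
pose xs k := (s k).1. pose rs k := (s k).2.
have sS k : s k.+1 = ((F ((k, xs k), rs k / 2)).1,
    Num.min (F ((k, xs k), rs k / 2)).2 (rs k) / 2) by [].
have inv k : X (xs k) /\ 0 < rs k.
  elim: k => [|k [IH1 IH2]]; first by split; [exact: Z0 HX|rewrite /rs /=].
  have [] := HF ((k, xs k), rs k / 2) IH1 (divr_gt0 IH2 (ltr0Sn _ 1)).
  move=> /= h1 h2 h3 h4; rewrite /xs /rs sS /=; split => //.
  by apply: divr_gt0 => //; rewrite lt_min h3 IH2.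
have props k : [/\ N (fun x => xs k.+1 x - xs k x) < rs k / 2,
   rs k.+1 <= rs k / 2, 0 < rs k.+1 &
   forall g, X g -> N (fun x => g x - xs k.+1 x) < 2 * rs k.+1 -> k%:R < NY (Top g)].
  have [IH1 IH2] := inv k.
  have [] := HF ((k, xs k), rs k / 2) IH1 (divr_gt0 IH2 (ltr0Sn _ 1)).
  move=> /= h1 h2 h3 h4.
  have [_ r1] := inv k.+1.
  rewrite /xs /rs sS /=; split => //.
  - by rewrite ler_pM2r ?invr_gt0 // ge_min lexx orbT.
  - move=> g Xg hg; apply: h4 => //.
    have : Num.min (F (k, xs k, rs k / 2)).2 (rs k) <= (F (k, xs k, rs k / 2)).2.
      by rewrite ge_min lexx.
    lra.
have [w Xw [_ wb]] : exists2 w, X w & ((fun n => N (fun x => xs n x - w x)) @ \oo --> (0:R)) /\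
    forall k, N (fun x => xs k x - w x) <= 2 * (rs k / 2).
  apply: (Zcauchy HX (b := fun k => rs k / 2)) => k.
  - exact: (inv k).1.
  - by apply: divr_ge0 => //; exact: ltW (inv k).2.
  - by have [_ h _ _] := props k; lra.
  - by have [h _ _ _] := props k; exact: ltW.
have Yw := TY Xw.
have NYw0 := NZ_ge0 HY Yw.
pose k := Num.Def.archi_bound (NY (Top w)).
have hk := archi_boundP NYw0.
have [_ _ r1 h4] := props k.
have := h4 w Xw.
rewrite (NZB_sym HX Xw (inv k.+1).1).
have := wb k.+1.
move=> hb /(_ _) h; have := h _; lra.
Qed.


Lemma approx : exists2 M : R, 0 <= M & forall h, X h -> forall eps, 0 < eps ->
  exists g, [/\ X g, N (fun x => g x - h x) < eps & NY (Top g) <= M * (N h + eps)].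
Proof.
have [n [x0 [r [Xx0 r0 B]]]] := baire_step.
exists (4 * n%:R / r); first by apply: divr_ge0; [apply: mulr_ge0|exact: ltW].
move=> h Xh eps eps0.
set nu := N h.
have nu0 : 0 <= nu := NZ_ge0 HX Xh.
have ne0 : 0 < nu + eps by lra.
pose c := r / (2 * (nu + eps)).
have c0 : 0 < c by apply: divr_gt0 => //; lra.
have cne : c != 0 by rewrite gt_eqF.
have hc1 : c * nu + c * eps = r / 2.
  rewrite -mulrDr /c; field; lra.
have ceps0 : 0 < c * eps by apply: mulr_gt0.
pose h' := fun x => c * h x.
have Xh' : X h' by apply: (ZZ HX).
have Nh' : N h' = c * nu by rewrite /h' (NZZ HX _ Xh) gtr0_norm.
pose h1 := fun x => h' x + x0 x.
have Xh1 : X h1 by apply: (ZD HX).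
have h1x0 : N (fun x => h1 x - x0 x) < r.
  have -> : (fun x => h1 x - x0 x) = h' by apply: funext => x; rewrite /h1 addrK.
  rewrite Nh'; lra.
have ce2 : 0 < c * eps / 2 by lra.
have [g1 [Xg1 Ng1 NYg1]] := B h1 Xh1 h1x0 _ ce2.
have x0x0 : N (fun x => x0 x - x0 x) < r.
  have -> : (fun x => x0 x - x0 x) = (fun _ => 0) by apply: funext => x; rewrite subrr.
  by rewrite (NZ0 HX).
have [g2 [Xg2 Ng2 NYg2]] := B x0 Xx0 x0x0 _ ce2.
pose e' := fun x => g1 x - g2 x.
have Xe' : X e' by apply: (ZB HX).
have Ne' : N (fun x => e' x - h' x) < c * eps.
  have -> : (fun x => e' x - h' x) = (fun x => (g1 x - h1 x) + (x0 x - g2 x)).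
    by apply: funext => x; rewrite /e' /h1; ring.
  apply: le_lt_trans (NZD HX (ZB HX Xg1 Xh1) (ZB HX Xx0 Xg2)) _.
  rewrite (NZB_sym HX Xx0 Xg2); lra.
have NYe' : NY (Top e') <= 2 * n%:R.
  rewrite /e' -(NY_TB Xg1 Xg2).
  apply: le_trans (NZB_le HY (TY Xg1) (TY Xg2)) _; lra.
exists (fun x => c^-1 * e' x); split.
- exact: (ZZ HX).
- have -> : (fun x => c^-1 * e' x - h x) = (fun x => c^-1 * (e' x - h' x)).
    by apply: funext => x; rewrite /h'; field.
  rewrite (NZZ HX _ (ZB HX Xe' Xh')) gtr0_norm ?invr_gt0 //.
  by rewrite ltr_pdivrMl.
- rewrite (NY_TZ _ Xe') gtr0_norm ?invr_gt0 //.
  have -> : c^-1 = 2 * (nu + eps) / r by rewrite /c invf_div.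
  have hp : 0 <= 2 * (nu + eps) / r by apply: divr_ge0; lra.
  apply: le_trans (ler_wpM2l hp NYe') _.
  rewrite le_eqVlt; apply/orP; left; apply/eqP; field; lra.
Qed.


Lemma bounded : exists2 M : R, 0 <= M & forall h, X h -> NY (Top h) <= M * N h.
Proof.
have [M M0 A] := approx.
have step : forall t : (T -> R) * R, exists g, X t.1 -> 0 < t.2 ->
    [/\ X g, N (fun x => g x - t.1 x) < t.2 & NY (Top g) <= M * (N t.1 + t.2)].
  move=> [f e] /=.
  have [[Xf e0]|nh] := pselect (X f /\ 0 < e); last first.
    by exists f => Xf e0; exfalso; apply: nh.
  by have [g Hg] := A f Xf e e0; exists g.
have [F HF] := choice step.
exists M => // h Xh.
set nu := N h.
have key : forall eta, 0 < eta -> NY (Top h) <= M * nu + 5 * M * eta.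
  move=> eta eta0.
  pose ep k := eta / 4 ^+ k.
  have p4 k : 0 < (4:R) ^+ k by apply: exprn_gt0.
  have ep0 k : 0 < ep k by apply: divr_gt0.
  have epS k : ep k.+1 = ep k / 4 by rewrite /ep exprS invfM mulrA mulrAC.
  pose hs := fix hs k := match k with 0%N => h
     | k'.+1 => fun x => hs k' x - F (hs k', ep k') x end.
  pose es k := F (hs k, ep k).
  have hsS k : hs k.+1 = (fun x => hs k x - es k x) by [].
  have Xhs k : X (hs k).
    elim: k => [|k IH] //; rewrite hsS; apply: (ZB HX) => //.
    by have [] := HF (hs k, ep k) IH (ep0 k).
  have Pes k : [/\ X (es k), N (fun x => es k x - hs k x) < ep k &
      NY (Top (es k)) <= M * (N (hs k) + ep k)].
    exact: HF (hs k, ep k) (Xhs k) (ep0 k).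
  have Nhs k : N (hs k.+1) < ep k.
    have [Xe Ne _] := Pes k.
    by rewrite hsS (NZB_sym HX (Xhs k) Xe).
  pose u k := fun x => h x - hs k.+1 x.
  have Xu k : X (u k) by apply: (ZB HX).
  have Nu k : N (fun x => u k x - h x) <= eta / 4 ^+ k.
    have -> : (fun x => u k x - h x) = (fun x => - hs k.+1 x).
      by apply: funext => x; rewrite /u; ring.
    by rewrite (NZN HX (Xhs _)); apply: ltW; exact: Nhs.
  pose v k := Top (u k).
  pose b k := 2 * M * ep k.
  have Nv k : NY (fun x => v k.+1 x - v k x) <= b k.
    rewrite /v (NY_TB (Xu _) (Xu _)).
    have -> : (fun y => u k.+1 y - u k y) = es k.+1.
      by apply: funext => x; rewrite /u hsS; ring.
    have [_ _ h1] := Pes k.+1.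
    apply: le_trans h1 _.
    have := Nhs k; rewrite epS => h2.
    have h3 : M * N (hs k.+1) <= M * ep k by apply: ler_wpM2l => //; exact: ltW.
    have -> : M * (N (hs k.+1) + ep k / 4) = M * N (hs k.+1) + M * ep k / 4 by ring.
    rewrite /b.
    have : 0 <= M * ep k by apply: mulr_ge0 => //; exact: ltW.
    lra.
  have bh k : b k.+1 <= b k / 2.
    rewrite /b epS.
    have -> : 2 * M * (ep k / 4) = (M * ep k) / 2 by field.
    have -> : 2 * M * ep k / 2 = M * ep k by field.
    have : 0 <= M * ep k by apply: mulr_ge0 => //; exact: ltW.
    lra.
  have [w Yw [cvw wb]] := Zcauchy HY (v := v) (b := b) (fun k => TY (Xu k))
    (fun k => mulr_ge0 (mulr_ge0 (ler0n _ 2) M0) (ltW (ep0 k))) bh Nv.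
  have aeh := closed_T Xu Xh Yw (ltW eta0) Nu cvw.
  rewrite (NZ_aeeq HY (TY Xh) Yw aeh).
  have h1 := NZ_le_sub HY (TY (Xu 0%N)) Yw.
  have u0 : u 0%N = es 0%N by apply: funext => x; rewrite /u hsS /=; ring.
  have [_ _ h2] := Pes 0%N.
  have h3 := wb 0%N.
  move: h1 h2 h3; rewrite /b /v u0 /ep /= expr0 divr1 => h1 h2 h3.
  move: h2 => /= h2.
  have : 2 * (2 * M * eta) = 4 * (M * eta) by ring.
  have : 5 * M * eta = 5 * (M * eta) by ring.
  have : M * (N h + eta) = M * nu + M * eta by rewrite mulrDr.
  lra.
apply/ler_addgt0Pr => e e0.
have M1 : 0 < 5 * M + 1 by lra.
have eta0 : 0 < e / (5 * M + 1) by apply: divr_gt0.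
apply: le_trans (key _ eta0) _.
rewrite lerD2l mulrA ler_pdivrMr //.
have -> : e * (5 * M + 1) = 5 * M * e + e by ring.
lra.
Qed.

End Op.

Theorem corollary4p4 (d : measure_display) (T : measurableType d) (R : realType)
  (mu : {measure set T -> \bar R}) (mu_fin : (mu setT < +oo)%E)
  (X : set (T -> R)) (N : (T -> R) -> R)
  (HX : banach_rect_space mu X N) (HXs : subsequence_property mu X N) :
  (forall (Y : set (T -> R)) (NY : (T -> R) -> R) (Top : (T -> R) -> (T -> R)),
      banach_rect_space mu Y NY -> subsequence_property mu Y NY ->
      positive_linear_op mu X Y Top -> op_continuous X N NY Top) /\
  (forall N0 : (T -> R) -> R,
      banach_rect_space mu X N0 -> subsequence_property mu X N0 ->
      equivalent_norms X N N0).
Proof.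
split.
  move=> Y NY Top HY HYs HT f Xf e e0.
  have [M M0 Hb] := bounded HX HY HT HXs HYs.
  have M1 : 0 < M + 1 by lra.
  exists (e / (M + 1)); first exact: divr_gt0.
  move=> g Xg hg.
  rewrite (NY_TB HX HY HT Xg Xf).
  apply: le_lt_trans (Hb _ (ZB HX Xg Xf)) _.
  apply: le_lt_trans (ler_wpM2l M0 (ltW hg)) _.
  rewrite mulrA ltr_pdivrMr //.
  have -> : e * (M + 1) = M * e + e by ring.
  lra.
move=> N0 HX0 HXs0.
have HT : positive_linear_op mu X X id.
  split.
  - by [].
  - by move=> f g _ _ H.
  - by move=> f g a _ _; apply: aeW.
  - by [].
have [K1 K10 H1] := bounded HX HX0 HT HXs HXs0.
have [K2 K20 H2] := bounded HX0 HX HT HXs0 HXs.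
exists (K2 + 1)^-1, (K1 + 1); split.
- by rewrite invr_gt0; lra.
- lra.
move=> f Xf; split.
  rewrite ler_pdivrMl; last by lra.
  have := H2 f Xf; have := NZ_ge0 HX0 Xf => /= h0 h.
  have : K2 * N0 f <= (K2 + 1) * N0 f by rewrite mulrDl mul1r lerDl.
  lra.
have := H1 f Xf; have := NZ_ge0 HX Xf => /= h0 h.
have : K1 * N f <= (K1 + 1) * N f.
  by rewrite mulrDl mul1r lerDl.
lra.
Qed.
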